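(* Fix $d \geq 2$. There exists a constant $c = c(d)$ such that for all $n$ large enough, all integers $k \geq n/(3d)$ and all $\theta \geq 1/(2d)$, the number of $(d-1)$-dimensional subcomplexes $X$ of the simplex on $n$ vertices with $|X| = k$ and $\beta(X) \leq (1-\theta)kn$ is at most $$\left(c\, n^{(d-1)\left(1 - \theta\left(1 - \frac{1}{2d^2}\right)\right)}\right)^k.$$
   Context: A $(d-1)$-dimensional subcomplex $X$ of the simplex on $[n]$ is identified with its set of $(d-1)$-faces, and $|X|$ is their number. $\beta(X)$ is the number of $d$-faces of the full simplex on $[n]$ that contain exactly one $(d-1)$-face of $X$. *)

(* Defs.v *)
From mathcomp Require Import all_boot.
From Stdlib Require Import Reals.

Set Implicit Arguments.
Unset Strict Implicit.
Unset Printing Implicit Defensive.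

(* The (d-1)-faces of the simplex on [n] = {0,...,n-1}: the d-element subsets. *)
Definition faces (n d : nat) : {set {set 'I_n}} := [set A : {set 'I_n} | #|A| == d].

Definition beta (n d : nat) (X : {set {set 'I_n}}) : nat :=
  #|[set s : {set 'I_n} | (#|s| == d.+1) && (#|[set A in X | A \subset s]| == 1)]|.

(* Number of (d-1)-dimensional subcomplexes X (identified with their sets of
   (d-1)-faces) with |X| = k and beta(X) <= (1 - theta) k n. *)
Definition count_complexes (n d k : nat) (theta : R) : nat :=
  #|[set X : {set {set 'I_n}} |
      [&& X \subset faces n d, #|X| == k &
          (if Rle_dec (INR (beta d X)) ((1 - theta) * INR k * INR n)%R then true else false)]]|.

(* Main.v *)
Require Import Defs.
From mathcomp Require Import all_boot.
From Stdlib Require Import Reals.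
From Stdlib Require Import Lra Lia.
From mathcomp Require Import zify.

Module RA.
Local Open Scope R_scope.

Lemma ln_ge0 x : 1 <= x -> 0 <= ln x.
Proof. intros; erewrite <- ln_1; destruct (Req_dec x 1); [subst; lra|].
left; apply ln_increasing; lra. Qed.

Lemma ln_le' x y : 0 < x -> x <= y -> ln x <= ln y.
Proof. intros; destruct (Req_dec x y); [subst; lra|]. left; apply ln_increasing; lra. Qed.

Lemma Rpower_pos x y : 0 < Rpower x y.
Proof. unfold Rpower; apply exp_pos. Qed.

Lemma Rpower_ge1 x y : 1 <= x -> 0 <= y -> 1 <= Rpower x y.
Proof. intros; erewrite <- (Rpower_O x) by lra; apply Rle_Rpower; lra. Qed.

Section Core.
Variables dr nr tr Dr th : R.
Let g := (dr - 1) / (2 * dr ^ 2).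
Hypothesis hd : 2 <= dr.
Hypothesis hn : 1 <= nr.
Hypothesis ht1 : Rpower nr (1 - g) < tr.
Hypothesis ht2 : tr <= 2 * Rpower nr (1 - g).
Hypothesis hD1 : nr - Dr <= 3 * dr ^ 2 * Rpower nr (1 - g).
Hypothesis hD2 : nr / 2 <= Dr.
Hypothesis hth : 0 <= th <= 1.

Definition lnc (d : R) := ln 12 + d ^ 2 / ((d - 1) / (2 * d ^ 2)) + ln d + ln 6
   + 6 * d ^ 2 * ln 6 + 6 * d ^ 3 / ((d - 1) / (2 * d ^ 2)).

Lemma core :
  ln 12 + dr ^ 2 * ln nr / tr + (ln dr + ln nr - ln tr)
  + ((1 - th) * nr / Dr) * (ln 3 + (dr - 2) * ln nr + ln tr)
  <= lnc dr + (dr - 1 - th * (dr - 1 - g)) * ln nr.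
Proof.
set (L := ln nr). set (lT := ln tr).
set (p := Rpower nr (1 - g)). set (q := Rpower nr g).
change (Rpower nr (1 - g)) with p in ht1, ht2, hD1.
assert (hg : 0 < g /\ g <= 1/4).
{ unfold g; split.
  - apply Rdiv_lt_0_compat; nra.
  - apply Rmult_le_reg_r with (2 * dr ^ 2); [nra|].
    unfold Rdiv; erewrite Rmult_assoc, Rinv_l; nra. }
destruct hg as [hg0 hg1].
assert (hL : 0 <= L) by (apply ln_ge0; lra).
assert (hp : 0 < p) by apply Rpower_pos.
assert (hq1 : 1 <= q) by (apply Rpower_ge1; lra).
assert (hpq : p * q = nr).
{ unfold p, q; erewrite <- Rpower_plus.
  replace (1 - g + g) with 1 by ring; apply Rpower_1; lra. }
assert (hqL : g * L < q).
{ unfold q, Rpower; fold L.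
  pose proof (exp_ineq1_le (g * L)); lra. }
assert (hpq2 : q <= p).
{ unfold p, q; apply Rle_Rpower; lra. }
assert (htr : 0 < tr) by lra.
assert (F1 : (1 - g) * L < lT).
{ unfold lT; replace ((1 - g) * L) with (ln p) by (unfold p; erewrite ln_Rpower; auto).
  apply ln_increasing; lra. }
assert (F2 : lT <= ln 2 + (1 - g) * L).
{ unfold lT; replace ((1 - g) * L) with (ln p) by (unfold p; erewrite ln_Rpower; auto).
  erewrite <- ln_mult by lra. apply ln_le'; lra. }
assert (hln2 : 0 < ln 2) by (erewrite <- ln_1; apply ln_increasing; lra).
assert (hln3 : ln 3 + ln 2 = ln 6) by (erewrite <- ln_mult by lra; f_equal; lra).
assert (hln6 : 0 <= ln 6) by (apply ln_ge0; lra).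
assert (T1 : dr ^ 2 * L / tr <= dr ^ 2 / g).
{ apply Rle_trans with (dr ^ 2 * L / q).
  - unfold Rdiv; apply Rmult_le_compat_l; [nra|].
    apply Rinv_le_contravar; lra.
  - unfold Rdiv; erewrite !Rmult_assoc; apply Rmult_le_compat_l; [nra|].
    apply Rmult_le_reg_r with (q * g); [nra|].
    replace (L * / q * (q * g)) with (g * L) by (field; lra).
    replace (/ g * (q * g)) with q by (field; lra). lra. }
assert (hDpos : 0 < Dr) by lra.
assert (R1 : nr / Dr <= 1 + 6 * dr ^ 2 / q).
{ apply Rmult_le_reg_r with (Dr * q); [nra|].
  replace (nr / Dr * (Dr * q)) with (nr * q) by (field; lra).
  replace ((1 + 6 * dr ^ 2 / q) * (Dr * q)) with (Dr * q + 6 * dr ^ 2 * Dr) by (field; lra).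
  assert (nr - Dr <= 3 * dr ^ 2 * p) by exact hD1.
  assert (p * q <= 2 * Dr) by lra.
  nra. }
set (X := ln 3 + (dr - 2) * L + lT).
assert (X0 : 0 <= X).
{ unfold X. assert (0 <= ln 3) by (apply ln_ge0; lra). nra. }
assert (X1 : X <= ln 6 + (dr - 1 - g) * L) by (unfold X; lra).
assert (X2 : X <= ln 6 + dr * L) by (unfold X; nra).
assert (T2 : (1 - th) * nr / Dr * X <= (1 - th) * X + 6 * dr ^ 2 / q * X).
{ replace ((1 - th) * nr / Dr) with ((1 - th) * (nr / Dr)) by (field; lra).
  assert (0 <= 1 - th) by lra.
  assert (hb : 0 <= 6 * dr ^ 2 / q) by (unfold Rdiv; apply Rmult_le_pos; [nra | left; apply Rinv_0_lt_compat; lra]).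
  set (b := 6 * dr ^ 2 / q) in *. set (a := nr / Dr) in *.
  assert ((1 - th) * a <= (1 - th) * (1 + b)) by
    (apply Rmult_le_compat_l; lra).
  assert ((1 - th) * a * X <= (1 - th) * (1 + b) * X) by
    (apply Rmult_le_compat_r; lra).
  assert (0 <= th * (b * X)) by (apply Rmult_le_pos; [lra | apply Rmult_le_pos; lra]).
  nra. }
assert (T3 : 6 * dr ^ 2 / q * X <= 6 * dr ^ 2 * ln 6 + 6 * dr ^ 3 / g).
{ assert (6 * dr ^ 2 / q * X <= 6 * dr ^ 2 / q * (ln 6 + dr * L)).
  { apply Rmult_le_compat_l; [unfold Rdiv; apply Rmult_le_pos; [nra | left; apply Rinv_0_lt_compat; lra] | lra]. }
  assert (6 * dr ^ 2 / q * ln 6 <= 6 * dr ^ 2 * ln 6).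
  { unfold Rdiv; erewrite Rmult_assoc, (Rmult_comm (/ q)), <- Rmult_assoc.
    erewrite <- (Rmult_1_r (6 * dr ^ 2 * ln 6)) at 2.
    apply Rmult_le_compat_l; [nra|].
    erewrite <- Rinv_1; apply Rinv_le_contravar; lra. }
  assert (6 * dr ^ 2 / q * (dr * L) <= 6 * dr ^ 3 / g).
  { apply Rmult_le_reg_r with (q * g); [nra|].
    replace (6 * dr ^ 2 / q * (dr * L) * (q * g)) with (6 * dr ^ 3 * (g * L)) by (field; lra).
    replace (6 * dr ^ 3 / g * (q * g)) with (6 * dr ^ 3 * q) by (field; lra).
    apply Rmult_le_compat_l; [nra | lra]. }
  nra. }
assert (T4 : (1 - th) * X <= (1 - th) * ln 6 + (1 - th) * (dr - 1 - g) * L).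
{ assert (0 <= 1 - th) by lra. nra. }
assert (T5 : (1 - th) * ln 6 <= ln 6) by nra.
unfold lnc; fold g.
nra.
Qed.
End Core.


Lemma exp_Rpower x y : 0 < x -> Rpower x y = exp (y * ln x).
Proof. reflexivity. Qed.

Lemma assemble (d k h J cnt : nat) (nr tr Dr th : R) :
  (2 <= d)%coq_nat -> (1 <= k)%coq_nat -> (J <= k)%coq_nat -> 1 <= nr -> 1 <= tr -> 0 < Dr ->
  0 <= th <= 1 ->
  INR cnt * INR k ^ k <= 12 ^ k * nr ^ (d * h) * (INR h * nr) ^ (k - J) * (nr ^ d) ^ J ->
  INR h * tr <= INR d * INR k ->
  nr <= 3 * INR d * INR k ->
  INR J * Dr <= (1 - th) * INR k * nr ->
  INR cnt <= exp (INR k * (ln 12 + INR d ^ 2 * ln nr / tr + (ln (INR d) + ln nr - ln tr)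
      + ((1 - th) * nr / Dr) * (ln 3 + (INR d - 2) * ln nr + ln tr))).
Proof.
intros hd hk hJ hn ht hD hth Hc Hh Hnk HJ.
set (K := INR k) in *. set (dr := INR d) in *.
assert (hK : 0 < K) by (apply lt_0_INR; lia).
assert (hdr : 2 <= dr) by (unfold dr; apply (le_INR 2); lia).
set (a := dr * nr / tr). set (b := 3 * dr * nr ^ (d - 1)).
assert (hnd : nr ^ d = nr * nr ^ (d - 1)).
{ replace d with (S (d - 1)) at 1 by lia. reflexivity. }
assert (hpn : 0 < nr ^ (d - 1)) by (apply pow_lt; lra).
assert (ha : 0 < a) by (unfold a; apply Rdiv_lt_0_compat; nra).
assert (hb : 0 < b) by (unfold b; nra).
assert (A1 : INR h * nr <= K * a).
{ unfold a. apply Rmult_le_reg_r with tr; [lra|].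
  replace (K * (dr * nr / tr) * tr) with (dr * K * nr) by (field; lra).
  nra. }
assert (A2 : nr ^ d <= K * b).
{ erewrite hnd; unfold b. nra. }
assert (hh0 : 0 <= INR h) by apply pos_INR.
assert (S1 : INR cnt * K ^ k <= 12 ^ k * nr ^ (d * h) * (K ^ k * (a ^ (k - J) * b ^ J))).
{ eapply Rle_trans; [exact Hc|].
  erewrite Rmult_assoc. apply Rmult_le_compat_l.
  { apply Rmult_le_pos; apply pow_le; lra. }
  assert (E : K ^ k * (a ^ (k - J) * b ^ J) = (K * a) ^ (k - J) * (K * b) ^ J).
  { erewrite !Rpow_mult_distr.
    replace (K ^ k) with (K ^ (k - J) * K ^ J) by (erewrite <- pow_add; f_equal; lia).
    ring. }
  erewrite E. apply Rmult_le_compat.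
  - apply pow_le; nra.
  - apply pow_le; apply pow_le; lra.
  - apply pow_incr; nra.
  - apply pow_incr; split; [apply pow_le; lra | exact A2]. }
assert (hKk : 0 < K ^ k) by (apply pow_lt; lra).
assert (S2 : INR cnt <= 12 ^ k * nr ^ (d * h) * (a ^ (k - J) * b ^ J)).
{ apply Rmult_le_reg_r with (K ^ k); [lra|].
  eapply Rle_trans; [exact S1|]. right; ring. }
set (Lam := (1 - th) * K * nr / Dr).
assert (hba : 1 <= b / a).
{ unfold a, b. apply Rmult_le_reg_r with (dr * nr / tr); [exact ha|].
  replace (3 * dr * nr ^ (d - 1) / (dr * nr / tr) * (dr * nr / tr)) with (3 * dr * nr ^ (d - 1)) by (field; nra).
  erewrite Rmult_1_l.
  apply Rmult_le_reg_r with tr; [lra|].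
  replace (dr * nr / tr * tr) with (dr * nr) by (field; lra).
  destruct (Nat.eq_dec d 2) as [e|ne].
  - subst d. simpl. assert (0 <= dr * nr) by nra. nra.
  - assert (nr <= nr ^ (d - 1)).
    { replace (subn d 1) with (S (subn d 2)) by lia. simpl.
      assert (1 <= nr ^ (d - 2)) by (apply pow_R1_Rle; lra). nra. }
    assert (0 <= dr * nr) by nra. assert (dr * nr <= dr * nr ^ (d - 1)) by (apply Rmult_le_compat_l; lra). assert (0 <= dr * nr ^ (d - 1)) by nra. nra. }
assert (S3 : a ^ (k - J) * b ^ J <= a ^ k * Rpower (b / a) Lam).
{ replace (b ^ J) with (a ^ J * (b / a) ^ J).
  2:{ erewrite <- Rpow_mult_distr. f_equal. field; lra. }
  replace (a ^ (k - J) * (a ^ J * (b / a) ^ J)) with (a ^ k * (b / a) ^ J).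
  2:{ replace (a ^ k) with (a ^ (k - J) * a ^ J) by (erewrite <- pow_add; f_equal; lia). ring. }
  apply Rmult_le_compat_l; [apply pow_le; lra|].
  erewrite <- Rpower_pow by lra.
  apply Rle_Rpower; [exact hba|].
  unfold Lam. apply Rmult_le_reg_r with Dr; [lra|].
  replace ((1 - th) * K * nr / Dr * Dr) with ((1 - th) * K * nr) by (field; lra).
  exact HJ. }
assert (S4 : nr ^ (d * h) <= Rpower nr (dr * dr * K / tr)).
{ erewrite <- Rpower_pow by lra. apply Rle_Rpower; [exact hn|].
  erewrite mult_INR. fold dr.
  apply Rmult_le_reg_r with tr; [lra|].
  replace (dr * dr * K / tr * tr) with (dr * (dr * K)) by (field; lra).
  erewrite Rmult_assoc. apply Rmult_le_compat_l; lra. }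
assert (S5 : INR cnt <= 12 ^ k * Rpower nr (dr * dr * K / tr) * (a ^ k * Rpower (b / a) Lam)).
{ eapply Rle_trans; [exact S2|].
  apply Rmult_le_compat.
  - apply Rmult_le_pos; apply pow_le; lra.
  - apply Rmult_le_pos; apply pow_le; lra.
  - apply Rmult_le_compat_l; [apply pow_le; lra | exact S4].
  - exact S3. }
eapply Rle_trans; [exact S5|].
right.
erewrite <- (Rpower_pow k 12) by lra. erewrite <- (Rpower_pow k a) by lra.
unfold Rpower. erewrite <- !exp_plus. f_equal.
assert (hla : ln a = ln dr + ln nr - ln tr).
{ unfold a, Rdiv. erewrite ln_mult, ln_mult, ln_Rinv; try lra; try nra.
  apply Rinv_0_lt_compat; lra. }
assert (hlba : ln (b / a) = ln 3 + (dr - 2) * ln nr + ln tr).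
{ unfold Rdiv. erewrite ln_mult by (try apply Rinv_0_lt_compat; lra).
  erewrite ln_Rinv by lra. erewrite hla. unfold b.
  erewrite ln_mult, ln_mult, ln_pow; try lra; try nra.
  erewrite minus_INR by lia. fold dr. simpl INR. ring. }
erewrite hla, hlba. unfold Lam. fold K. field. split; lra.
Qed.


Lemma succ_pow_le (k : nat) : (1 <= k)%coq_nat -> (INR k + 1) ^ k <= 3 * INR k ^ k.
Proof.
intros hk. set (K := INR k).
assert (hK : 0 < K) by (apply lt_0_INR; lia).
assert (E : (K + 1) ^ k = K ^ k * (1 + / K) ^ k).
{ erewrite <- Rpow_mult_distr. f_equal. field. lra. }
erewrite E.
assert (B : (1 + / K) ^ k <= 3).
{ apply Rle_trans with (exp (/ K) ^ k).
  - apply pow_incr. split.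
    + assert (0 < / K) by (apply Rinv_0_lt_compat; lra). lra.
    + apply exp_ineq1_le.
  - erewrite <- Rpower_pow by apply exp_pos. unfold Rpower. erewrite ln_exp.
    fold K. replace (K * / K) with 1 by (field; lra). apply exp_le_3. }
assert (0 < K ^ k) by (apply pow_lt; lra).
nra.
Qed.

Lemma exists_t (x : R) : 0 <= x -> exists t : nat, x < INR t <= x + 1.
Proof.
intros hx. destruct (archimed x) as [h1 h2].
assert (hz : (0 < up x)%Z) by (apply lt_IZR; lra).
exists (Z.to_nat (up x)).
erewrite INR_IZR_INZ, Stdlib.ZArith.Znat.Z2Nat.id by lia. lra.
Qed.

Lemma N_prop (d n : nat) : (2 <= d)%coq_nat -> ((6 * d * d) ^ (4 * d) <= n)%coq_nat ->
  1 <= INR n /\ 6 * INR d ^ 2 <= Rpower (INR n) ((INR d - 1) / (2 * INR d ^ 2)).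
Proof.
intros hd hn. set (dr := INR d).
assert (hdr : 2 <= dr) by (unfold dr; apply (le_INR 2); lia).
set (M := 6 * dr ^ 2).
assert (hM : 1 <= M) by (unfold M; nra).
assert (hN : M ^ (4 * d) <= INR n).
{ apply le_INR in hn. erewrite pow_INR in hn. unfold M, dr.
  replace (6 * INR d ^ 2) with (INR (6 * d * d)) by (erewrite !mult_INR; simpl; ring).
  exact hn. }
assert (hn1 : 1 <= INR n).
{ apply Rle_trans with (M ^ (4 * d)); [apply pow_R1_Rle; lra | exact hN]. }
split; [exact hn1|].
apply Rle_trans with (Rpower (INR n) (/ (4 * dr))).
- apply Rle_trans with (Rpower (M ^ (4 * d)) (/ (4 * dr))).
  + erewrite <- Rpower_pow by lra. erewrite Rpower_mult.
    erewrite mult_INR. fold dr. simpl INR.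
    replace ((1 + 1 + 1 + 1) * dr * / (4 * dr)) with 1 by (field; lra).
    erewrite Rpower_1; lra.
  + apply Rle_Rpower_l.
    * left; apply Rinv_0_lt_compat; lra.
    * split; [apply pow_lt; lra | exact hN].
- apply Rle_Rpower; [exact hn1|].
  apply Rmult_le_reg_r with (4 * dr * (2 * dr ^ 2)); [nra|].
  replace (/ (4 * dr) * (4 * dr * (2 * dr ^ 2))) with (2 * dr ^ 2) by (field; lra).
  replace ((dr - 1) / (2 * dr ^ 2) * (4 * dr * (2 * dr ^ 2))) with (4 * dr * (dr - 1)) by (field; lra).
  nra.
Qed.

Lemma exp_le' x y : x <= y -> exp x <= exp y.
Proof. intros h; destruct (Req_dec x y) as [e|ne]; [subst; lra|].
left; apply exp_increasing; lra. Qed.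
End RA.

Set Implicit Arguments.
Unset Strict Implicit.
Unset Printing Implicit Defensive.

Module Aux.
Import ssrnat.

Lemma card_bigcup_le (I T : finType) (P : pred I) (F : I -> {set T}) :
  #|\bigcup_(i | P i) F i| <= \sum_(i | P i) #|F i|.
Proof.
elim/big_ind2: _ => [|A1 n1 A2 n2 h1 h2|]; first by rewrite cards0.
  by rewrite cardsU; apply: leq_trans (leq_subr _ _) (leq_add h1 h2).
by [].
Qed.

Lemma leq_expL m n e : m <= n -> m ^ e <= n ^ e.
Proof. move=> mn; elim: e => [|e IH]; first by []. by rewrite !expnS leq_mul. Qed.

Lemma ffact_le_exp a m : a ^_ m <= a ^ m.
Proof.
elim: m a => [|m IH] a; first by [].
rewrite ffactnS expnS; apply: leq_mul => //.
apply: leq_trans (IH _) _; apply: Aux.leq_expL; lia.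
Qed.

Lemma bin_le_exp a m : 'C(a, m) <= a ^ m.
Proof.
apply: leq_trans (ffact_le_exp a m); rewrite -bin_ffact.
by apply: leq_pmulr; apply: fact_gt0.
Qed.

Lemma bin_le_2exp k j : 'C(k, j) <= 2 ^ k.
Proof.
rewrite -[k in 'C(k, _)]card_ord -card_draws -[k in 2 ^ k]card_ord -cardsT.
rewrite -card_powerset; apply: subset_leq_card; apply/subsetP=> A _.
by rewrite powersetE subsetT.
Qed.

Lemma sum_bin_le N h : \sum_(i < h.+1) 'C(N, i) <= N.+1 ^ h.
Proof.
elim: h => [|h IH]; first by rewrite big_ord1 bin0.
rewrite big_ord_recr /= expnS mulSn.
apply: (leq_add IH).
apply: leq_trans (bin_le_exp _ _) _; rewrite expnS leq_mul2l.
by apply/orP; right; apply: Aux.leq_expL.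
Qed.

Lemma mono_pow a b j J k : a <= b -> j <= J -> J <= k ->
  a ^ (k - j) * b ^ j <= a ^ (k - J) * b ^ J.
Proof.
move=> ab jJ Jk.
have gen : forall e1 e2, a ^ (e1 + e2) * b ^ j <= a ^ e1 * b ^ (e2 + j).
  move=> e1 e2; rewrite !expnD -mulnA leq_mul2l; apply/orP; right.
  by rewrite leq_mul2r; apply/orP; right; apply: Aux.leq_expL.
have := gen (k - J) (J - j).
have e1 : k - J + (J - j) = k - j by lia.
have e2 : J - j + j = J by lia.
by rewrite e1 e2.
Qed.

Lemma term_bound a b k j : j <= k ->
  'C(a, k - j) * 'C(b, j) * k`! <= 2 ^ k * (a ^ (k - j) * b ^ j).
Proof.
move=> jk.
rewrite -(bin_fact jk).
have -> : 'C(a, k - j) * 'C(b, j) * ('C(k, j) * (j`! * (k - j)`!))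
   = 'C(k, j) * (('C(a, k - j) * (k - j)`!) * ('C(b, j) * j`!)) by lia.
apply: leq_mul; first exact: bin_le_2exp.
by apply: leq_mul; rewrite bin_ffact; exact: ffact_le_exp.
Qed.


Section Comb.
Variables n d : nat.
Hypothesis d_gt0 : 0 < d.
Local Notation T := {set 'I_n}.

Definition mult (X : {set T}) (s : T) := #|[set A in X | s \subset A]|.
Definition Sf : {set T} := [set s : T | #|s| == d.-1].
Definition Hs t X : {set T} := [set s in Sf | t <= mult X s].
Definition FH (H : {set T}) : {set T} :=
  [set A in faces n d | [exists s in H, s \subset A]].
Definition light t X := X :\: FH (Hs t X).

Lemma card_subfaces (A : T) : #|A| = d -> #|[set s in Sf | s \subset A]| = d.
Proof.
move=> cA.
have -> : [set s in Sf | s \subset A] = [set s : T | s \subset A & #|s| == d.-1].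
  by apply/setP=> s; rewrite !inE andbC.
rewrite cards_draws cA -subn1 bin_sub ?bin1 //.
Qed.

Lemma face_split (A s : T) : #|A| = d -> #|s| = d.-1 -> s \subset A ->
  exists v, A = v |: s.
Proof.
move=> cA cs sA.
have : #|A :\: s| == 1 by rewrite cardsDS // cA cs; apply/eqP; lia.
case/cards1P=> v Hv; exists v.
by rewrite -{1}(setID A s) (setIidPr sA) Hv setUC.
Qed.

Lemma FH_card (H : {set T}) : H \subset Sf -> #|FH H| <= #|H| * n.
Proof.
move=> HS.
have sub : FH H \subset \bigcup_(s in H) ((fun v => v |: s) @: [set: 'I_n]).
  apply/subsetP=> A; rewrite inE => /andP[]; rewrite inE => /eqP cA.
  case/existsP=> s /andP[sH sA].
  have cs : #|s| = d.-1 by move: (subsetP HS s sH); rewrite inE => /eqP.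
  have [v Av] := face_split cA cs sA.
  apply/bigcupP; exists s => //; apply/imsetP; exists v; by rewrite ?inE.
apply: leq_trans (subset_leq_card sub) _.
apply: leq_trans (card_bigcup_le _ _) _.
rewrite -sum_nat_const; apply: leq_sum => s _.
by apply: leq_trans (leq_imset_card _ _) _; rewrite cardsT card_ord.
Qed.

Lemma mult_sum (X : {set T}) (s : T) : mult X s = \sum_(A in X) (s \subset A).
Proof.
rewrite /mult -sum1_card.
rewrite [RHS]big_mkcond [LHS]big_mkcond; apply: eq_bigr => A _.
by rewrite !inE; case: (A \in X); case: (s \subset A).
Qed.

Lemma Hs_card t (X : {set T}) : X \subset faces n d -> #|Hs t X| * t <= d * #|X|.
Proof.
move=> XF.
rewrite -sum_nat_const.
apply: (@leq_trans (\sum_(s in Hs t X) mult X s)).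
  by apply: leq_sum => s; rewrite inE => /andP[_].
apply: (@leq_trans (\sum_(s in Sf) mult X s)).
  rewrite [X in _ <= X](bigID (fun s => s \in Hs t X)) /=.
  apply: leq_trans (leq_addr _ _).
  apply: eq_leq; apply: eq_bigl => s; rewrite !inE.
  by case: (#|s| == d.-1).
under eq_bigr do rewrite mult_sum.
rewrite exchange_big /= mulnC -sum_nat_const.
apply: leq_sum => A AX.
have cA : #|A| = d by move: (subsetP XF A AX); rewrite inE => /eqP.
rewrite -(card_subfaces cA) -sum1_card.
rewrite [in X in _ <= X]big_mkcond [in X in X <= _]big_mkcond.
apply: leq_sum => s _; rewrite !inE; by case: (#|s| == d.-1); case: (s \subset A).
Qed.


Definition good (X : {set T}) (A : T) : {set 'I_n} :=
  [set v : 'I_n | (v \notin A) && [forall B in X, (B \subset v |: A) ==> (B == A)]].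

Lemma good_card t (X : {set T}) A : X \subset faces n d -> A \in light t X ->
  n - d - d * (d * t) <= #|good X A|.
Proof.
move=> XF AL.
have AX : A \in X by move: AL; rewrite inE => /andP[].
have cA : #|A| = d by move: (subsetP XF A AX); rewrite inE => /eqP.
have noH : forall s, s \in Sf -> s \subset A -> mult X s < t.
  move=> s sS sA; rewrite ltnNge; apply/negP => tm.
  move: AL; rewrite inE => /andP[/negP nF _]; apply: nF.
  rewrite inE (subsetP XF A AX) /=; apply/existsP; exists s.
  by rewrite !inE; rewrite inE in sS; rewrite sS tm sA.
pose Bad := \bigcup_(s in [set s in Sf | s \subset A])
              \bigcup_(B in [set B in X | s \subset B]) B.
have cBad : #|Bad| <= d * (d * t).
  apply: leq_trans (card_bigcup_le _ _) _.
  have -> : d * (d * t) = #|[set s in Sf | s \subset A]| * (d * t)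
    by rewrite card_subfaces.
  rewrite -sum_nat_const; apply: leq_sum => s.
  rewrite inE => /andP[sS sA].
  apply: leq_trans (card_bigcup_le _ _) _.
  apply: (@leq_trans (\sum_(B in [set B in X | s \subset B]) d)).
    apply: leq_sum => B; rewrite inE => /andP[BX _].
    by move: (subsetP XF B BX); rewrite inE => /eqP ->.
  rewrite sum_nat_const; have := noH s sS sA; rewrite /mult; nia.
have sub : ~: A :\: Bad \subset good X A.
  apply/subsetP=> v; rewrite !inE => /andP[vBad vA].
  rewrite vA /=; apply/forallP=> B; apply/implyP=> BX; apply/implyP=> BvA.
  have cB : #|B| = d by move: (subsetP XF B BX); rewrite inE => /eqP.
  case vB: (v \in B).
    exfalso; move/negP: vBad; apply.
    have sA : B :\ v \subset A.
      apply/subsetP=> x; rewrite inE => /andP[xv xB].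
      by move: (subsetP BvA x xB); rewrite inE (negbTE xv).
    have cs : #|B :\ v| = d.-1 by move: (cardsD1 v B); rewrite vB cB; lia.
    apply/bigcupP; exists (B :\ v); first by rewrite !inE cs eqxx sA.
    apply/bigcupP; exists B => //; first by rewrite inE BX subsetDl.
  have BA : B \subset A.
    apply/subsetP=> x xB; move: (subsetP BvA x xB); rewrite inE.
    rewrite inE; case/orP=> [/eqP xv|//]; by move: vB; rewrite -xv xB.
  by rewrite eqEcard BA cA cB leqnn.
apply: leq_trans (subset_leq_card sub).
rewrite cardsD.
have : #|~: A| = n - d by have := cardsC A; rewrite card_ord cA; lia.
have : #|~: A :&: Bad| <= #|Bad| by apply: subset_leq_card; apply: subsetIr.
lia.
Qed.

Lemma beta_light t (X : {set T}) : X \subset faces n d ->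
  #|light t X| * (n - d - d * (d * t)) <= beta d X.
Proof.
move=> XF.
pose P := [set p : T * 'I_n | (p.1 \in light t X) && (p.2 \in good X p.1)].
pose f := fun p : T * 'I_n => p.2 |: p.1.
have lX : forall A, A \in light t X -> A \in X by move=> A; rewrite inE => /andP[].
have cX : forall A, A \in X -> #|A| = d.
  by move=> A AX; move: (subsetP XF A AX); rewrite inE => /eqP.
have fP : f @: P \subset [set s : T | (#|s| == d.+1) &&
                 (#|[set A in X | A \subset s]| == 1)].
  apply/subsetP=> s /imsetP[[A v]]; rewrite inE /= => /andP[AL]; rewrite inE.
  move=> /andP[vA /forallP gv] ->; rewrite inE /f /=.
  rewrite cardsU1 vA cX ?lX // eqxx /=.
  apply/cards1P; exists A; apply/setP=> B; rewrite !inE.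
  apply/andP/eqP => [[BX BvA]|->]; last by rewrite lX // subsetUr.
  by have := gv B; rewrite BX BvA /= => /eqP.
have finj : {in P &, injective f}.
  move=> [A v] [A' v']; rewrite !inE /= /f.
  move=> /andP[/andP[_ AX] /andP[vA /forallP gv]] /andP[/andP[_ A'X] /andP[vA' _]] /= E.
  have AA : A' = A.
    by have := gv A'; rewrite A'X E subsetUr /= => /eqP.
  subst A'.
  have : v \in v' |: A by rewrite -E setU11.
  rewrite !inE (negbTE vA) orbF => /eqP ->; by [].
have cP : #|P| <= beta d X.
  rewrite -(card_in_imset finj); rewrite /beta; exact: subset_leq_card.
apply: leq_trans cP.
have -> : #|P| = \sum_(A : T) \sum_(v : 'I_n)
          (if (A \in light t X) && (v \in good X A) then 1 else 0).
  rewrite -sum1_card big_mkcond pair_big /=; apply: eq_bigr => p _.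
  by rewrite inE.
rewrite [X in _ <= X](bigID (fun A => A \in light t X)) /=.
apply: leq_trans (leq_addr _ _).
rewrite -sum_nat_const; apply: leq_sum => A AL.
apply: leq_trans (good_card XF AL) _.
rewrite -sum1_card big_mkcond /=; apply: leq_sum => v _.
by rewrite AL.
Qed.


Definition draws (B : {set T}) m : {set {set T}} :=
  [set Y : {set T} | (Y \subset B) && (#|Y| == m)].

Lemma card_draws_le (B : {set T}) m : #|draws B m| = 'C(#|B|, m).
Proof. by rewrite -cards_draws. Qed.

Lemma count_main t k (P : pred nat) : 0 < t ->
  #|[set X : {set T} | [&& X \subset faces n d, #|X| == k & P #|light t X|]]| <=
  \sum_(H in [set H : {set T} | (H \subset Sf) && (#|H| <= (d * k) %/ t)])
    \sum_(j < k.+1 | P j) 'C(#|FH H|, k - j) * 'C(#|faces n d|, j).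
Proof.
move=> t_gt0.
pose Img H (j : nat) := [set p.1 :|: p.2 | p in setX (draws (FH H) (k - j)) (draws (faces n d) j)].
have sub : [set X : {set T} | [&& X \subset faces n d, #|X| == k & P #|light t X|]]
  \subset \bigcup_(H in [set H : {set T} | (H \subset Sf) && (#|H| <= (d * k) %/ t)])
            \bigcup_(j < k.+1 | P j) Img H j.
  apply/subsetP=> X; rewrite inE => /and3P[XF /eqP cX PX].
  have lk : #|light t X| < k.+1.
    by rewrite ltnS -cX; apply: subset_leq_card; apply: subsetDl.
  apply/bigcupP; exists (Hs t X).
    rewrite inE; apply/andP; split.
      by apply/subsetP=> s; rewrite inE => /andP[].
    by rewrite leq_divRL // -cX; apply: Hs_card.
  apply/bigcupP; exists (Ordinal lk) => //.
  apply/imsetP; exists (X :&: FH (Hs t X), light t X).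
    rewrite inE /=; apply/andP; split; rewrite inE.
      rewrite subsetIr /=; apply/eqP.
      by have := cardsID (FH (Hs t X)) X; rewrite /light cX => <-; rewrite addnK.
    rewrite eqxx andbT; apply: subset_trans XF; apply: subsetDl.
  by rewrite /= /light setID.
apply: leq_trans (subset_leq_card sub) _.
apply: leq_trans (card_bigcup_le _ _) _.
apply: leq_sum => H _.
apply: leq_trans (card_bigcup_le _ _) _.
apply: leq_sum => j _.
apply: leq_trans (leq_imset_card _ _) _.
by rewrite cardsX !card_draws_le.
Qed.

Lemma card_faces : #|faces n d| = 'C(n, d).
Proof. by rewrite /faces card_draws card_ord. Qed.

Lemma card_Sf : #|Sf| = 'C(n, d.-1).
Proof. by rewrite /Sf card_draws card_ord. Qed.

Lemma count_nat t k (P : pred nat) : 0 < t ->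
  #|[set X : {set T} | [&& X \subset faces n d, #|X| == k & P #|light t X|]]| * k`! <=
  ('C(n, d.-1)).+1 ^ ((d * k) %/ t) * (k.+1 * (2 ^ k *
     (((d * k) %/ t * n) ^ (k - \max_(j < k.+1 | P j) j) *
      'C(n, d) ^ (\max_(j < k.+1 | P j) j)))).
Proof.
move=> t_gt0.
set h := (d * k) %/ t; set J := \max_(j < k.+1 | P j) j.
have JK : J <= k by apply/bigmax_leqP => j _; rewrite -ltnS.
apply: leq_trans (leq_mul (count_main k P t_gt0) (leqnn _)) _.
rewrite big_distrl /=.
apply: (@leq_trans (\sum_(H in [set H : {set T} | (H \subset Sf) && (#|H| <= h)])
    (k.+1 * (2 ^ k * ((h * n) ^ (k - J) * 'C(n, d) ^ J))))).
  apply: leq_sum => H; rewrite inE => /andP[HS Hh].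
  rewrite big_distrl /=.
  apply: (@leq_trans (\sum_(j < k.+1) (2 ^ k * ((h * n) ^ (k - J) * 'C(n, d) ^ J)))); last first.
    by rewrite sum_nat_const card_ord.
  rewrite [X in _ <= X](bigID (fun j : 'I_k.+1 => P j)) /=.
  apply: leq_trans (leq_addr _ _).
  apply: leq_sum => j Pj.
  have jk : j <= k by rewrite -ltnS.
  apply: leq_trans (term_bound _ _ jk) _.
  rewrite leq_mul2l; apply/orP; right.
  have aH : #|FH H| <= #|faces n d|.
    apply: subset_leq_card; apply/subsetP=> A.
    by rewrite inE => /andP[].
  have jJ : j <= J by apply: (leq_bigmax_cond j Pj).
  apply: leq_trans (mono_pow aH jJ JK) _.
  rewrite card_faces leq_mul2r; apply/orP; right; apply: Aux.leq_expL.
  apply: leq_trans (FH_card HS) _.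
  by rewrite leq_mul2r Hh orbT.
rewrite sum_nat_const leq_mul2r; apply/orP; right.
have sub : [set H : {set T} | (H \subset Sf) && (#|H| <= h)] \subset
   \bigcup_(i < h.+1) draws Sf i.
  apply/subsetP=> H; rewrite inE => /andP[HS Hh].
  apply/bigcupP; exists (Ordinal (Hh : #|H| < h.+1)) => //.
  by rewrite inE HS eqxx.
apply: leq_trans (subset_leq_card sub) _.
apply: leq_trans (card_bigcup_le _ _) _.
rewrite -card_Sf.
apply: leq_trans (sum_bin_le _ h).
by apply: eq_leq; apply: eq_bigr => i _; rewrite card_draws_le.
Qed.

End Comb.

End Aux.

Module Aux2.
Import ssrnat.

Lemma INR_expn m e : INR (m ^ e) = (INR m ^ e)%R.
Proof.
elim: e => [|e IH]; first by [].
by rewrite expnS (mult_INR m (m ^ e)) IH.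
Qed.

Lemma succ_pow_nat k : k.+1 ^ k <= 3 * k ^ k.
Proof.
case: k => [|k]; first by [].
apply/leP; apply: INR_le.
rewrite (mult_INR 3) !INR_expn [INR k.+2]S_INR.
have -> : INR 3 = 3%R by simpl; lra.
apply: RA.succ_pow_le; lia.
Qed.

Lemma kk_le k : k ^ k <= 3 ^ k * k`!.
Proof.
elim: k => [|k IH]; first by [].
rewrite factS expnS expnS.
have := succ_pow_nat k.
nia.
Qed.

Lemma bigmax_P k (P : pred nat) :
  (\max_(j < k.+1 | P j) j = 0) \/ P (\max_(j < k.+1 | P j) j).
Proof.
apply: (big_ind (fun x => (x = 0) \/ P x)); first by left.
  by move=> x y hx hy; case: (leqP x y).
by move=> i Pi; right.
Qed.

Lemma star n d t (k : nat) (P : pred nat) : 0 < d -> 0 < t -> 1 < n ->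
  #|[set X : {set {set 'I_n}} | X \subset faces n d & (#|X| == k) && P #|Aux.light d t X|]| * k ^ k <=
  12 ^ k * (n ^ d) ^ ((d * k) %/ t) * (((d * k) %/ t * n) ^ (k - \max_(j < k.+1 | P j) j))
   * (n ^ d) ^ (\max_(j < k.+1 | P j) j).
Proof.
move=> d_gt0 t_gt0 n_gt1.
have H := Aux.count_nat n d_gt0 k P t_gt0.
set cnt := #|_| in H *.
set h := (d * k) %/ t in H *.
set J := \max_(j < k.+1 | P j) j in H *.
have e1 : 'C(n, d.-1).+1 ^ h <= (n ^ d) ^ h.
  apply: Aux.leq_expL.
  have : 'C(n, d.-1) <= n ^ d.-1 by apply: Aux.bin_le_exp.
  have : n ^ d = n * n ^ d.-1 by rewrite -expnS prednK.
  have : 0 < n ^ d.-1 by rewrite expn_gt0; apply/orP; left; lia.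
  nia.
have e2 : k.+1 <= 2 ^ k by apply: ltn_expl.
have e3 : 'C(n, d) ^ J <= (n ^ d) ^ J by apply: Aux.leq_expL; apply: Aux.bin_le_exp.
have e4 : cnt * k ^ k <= 3 ^ k * (cnt * k`!).
  by rewrite mulnCA leq_mul2l kk_le orbT.
apply: leq_trans e4 _.
have e5 := leq_mul (leqnn (3 ^ k)) H.
apply: leq_trans e5 _.
have -> : 12 ^ k = 3 ^ k * 2 ^ k * 2 ^ k by rewrite -!expnMn.
set A := 'C(n, d.-1).+1 ^ h in e1 *.
set B := (h * n) ^ (k - J).
set C := 'C(n, d) ^ J in e3 *.
set Nh := (n ^ d) ^ h in e1 *.
set NJ := (n ^ d) ^ J in e3 *.
have : 3 ^ k * (A * (k.+1 * (2 ^ k * (B * C)))) <=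
       3 ^ k * (Nh * (2 ^ k * (2 ^ k * (B * NJ)))).
  apply: leq_mul => //; apply: leq_mul => //; apply: leq_mul => //.
  apply: leq_mul => //; apply: leq_mul => //.
nia.
Qed.
End Aux2.

Unset Implicit Arguments.

Theorem lemma8 : forall d : nat, (2 <= d)%N ->
  exists c : R, (0 < c)%R /\
  exists N : nat, forall n : nat, (N <= n)%N ->
  forall k : nat, (INR n / (3 * INR d) <= INR k)%R ->
  forall theta : R, (1 / (2 * INR d) <= theta)%R ->
  (INR (count_complexes n d k theta) <=
     (c * Rpower (INR n)
            ((INR d - 1) * (1 - theta * (1 - 1 / (2 * INR d ^ 2))))) ^ k)%R.
Proof.
move=> d hd.
have hd' : (2 <= d)%coq_nat by apply/leP.
have d_gt0 : 0 < d by apply: leq_trans hd.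
pose dr := INR d.
have hdr : (2 <= dr)%R by rewrite /dr; apply: (le_INR 2); exact: hd'.
have hdr' : (2 <= INR d)%R := hdr.
exists (exp (RA.lnc dr)); split; first exact: exp_pos.
exists (Nat.pow (6 * d * d) (4 * d)).
move=> n hN k hk th hth.
have hN' : (Nat.pow (6 * d * d) (4 * d) <= n)%coq_nat by apply/leP.
have [hn1 hq] := RA.N_prop d n hd' hN'.
pose nr := INR n. pose K := INR k.
have hnr : (1 <= nr)%R by exact: hn1.
have hK : (0 < K)%R.
  have : (0 < INR n / (3 * INR d))%R by apply: Rdiv_lt_0_compat; [exact: (Rlt_le_trans _ _ _ Rlt_0_1 hnr) | rewrite -/dr; lra].
  rewrite /K; lra.
have hk1 : (1 <= k)%coq_nat.
  have h0 : (INR 0 < INR k)%R by rewrite /=; exact: hK.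
  have := INR_lt _ _ h0; lia.
have hnk : (nr <= 3 * dr * K)%R.
  have h3 : (0 < 3 * dr)%R by lra.
  have := Rmult_le_compat_l (3 * dr) _ _ (Rlt_le _ _ h3) hk.
  have -> : (3 * dr * (INR n / (3 * INR d)) = nr)%R by rewrite /nr /dr; field; lra.
  by [].
have hc0 : (0 <= exp (RA.lnc dr) *
    Rpower (INR n) ((INR d - 1) * (1 - th * (1 - 1 / (2 * INR d ^ 2)))))%R.
  by apply: Rmult_le_pos; left; [apply: exp_pos | apply: RA.Rpower_pos].
case: (Rle_dec th 1) => hth1; last first.
  have -> : count_complexes n d k th = 0.
    apply/eqP; rewrite cards_eq0; apply/eqP/setP => X; rewrite !inE.
    case: Rle_dec => r; last by rewrite !andbF.
    exfalso; have := pos_INR (beta d X); have : (0 < K * nr)%R by nra.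
    rewrite /K /nr in hK hnr r *; nra.
  by apply: pow_le.
have hth0 : (0 <= th)%R.
  have : (0 < 1 / (2 * INR d))%R by apply: Rdiv_lt_0_compat; rewrite -/dr; lra.
  lra.
pose g := ((dr - 1) / (2 * dr ^ 2))%R.
have hg1 : (g <= 1 / 4)%R.
  rewrite /g; apply: (Rmult_le_reg_r (2 * dr ^ 2)); first nra.
  rewrite /Rdiv Rmult_assoc Rinv_l; nra.
pose p := Rpower nr (1 - g).
pose q := Rpower nr g.
have hp1 : (1 <= p)%R by apply: RA.Rpower_ge1; lra.
have hpq : (p * q = nr)%R.
  rewrite /p /q -Rpower_plus (_ : (1 - g + g = 1)%R); last by ring.
  by rewrite Rpower_1 //; lra.
have hq6 : (6 * dr ^ 2 <= q)%R by exact: hq.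
have [t [ht1 ht2]] := RA.exists_t p (Rle_trans _ _ _ Rle_0_1 hp1).
pose tr := INR t.
have htr2 : (tr <= 2 * p)%R by rewrite /tr; lra.
have htr1 : (1 <= tr)%R by rewrite /tr; lra.
have t_gt0 : 0 < t by apply/ltP; apply: INR_lt; simpl; lra.
have hsmall : (dr + dr * (dr * tr) <= nr / 2)%R.
  have a1 : (dr <= dr ^ 2 * p)%R by nra.
  have a2 : (dr * (dr * tr) <= 2 * dr ^ 2 * p)%R by nra.
  have a3 : (6 * dr ^ 2 * p <= q * p)%R by nra.
  nra.
have hle : (d + d * (d * t) <= n)%coq_nat.
  apply: INR_le; rewrite plus_INR !mult_INR -/dr -/tr -/nr; nra.
pose D := n - d - d * (d * t).
have hDr : INR D = (nr - dr - dr * (dr * tr))%R.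
  rewrite /D -subnDA minus_INR // plus_INR !mult_INR; rewrite -/dr -/tr -/nr; ring.
pose Dr := INR D.
have hD2 : (nr / 2 <= Dr)%R by rewrite /Dr hDr; lra.
have hD1 : (nr - Dr <= 3 * dr ^ 2 * p)%R by rewrite /Dr hDr; nra.
have hn2 : 1 < n by apply/ltP; apply: INR_lt; simpl; rewrite -/nr; nra.
pose P := fun j : nat =>
  if Rle_dec (INR j * INR D) ((1 - th) * INR k * INR n) then true else false.
have sub : count_complexes n d k th <=
   #|[set X : {set {set 'I_n}} | X \subset faces n d & (#|X| == k) && P #|Aux.light d t X|]|.
  apply: subset_leq_card; apply/subsetP => X; rewrite !inE => /and3P[XF cX].
  case: Rle_dec => // r _; rewrite XF cX /= /P; case: Rle_dec => // nr'.
  exfalso; apply: nr'; apply: Rle_trans r.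
  rewrite -mult_INR; apply: le_INR; apply/leP; exact: Aux.beta_light.
have st := Aux2.star k P d_gt0 t_gt0 hn2.
set cnt := #|_| in sub st.
set J := \max_(j < k.+1 | P j) j in st.
set h := (d * k) %/ t in st.
have hJk : (J <= k)%coq_nat by apply/leP/bigmax_leqP => j _; rewrite -ltnS.
have hJ : (INR J * Dr <= (1 - th) * K * nr)%R.
  case: (Aux2.bigmax_P k P) => hJ; rewrite -/J in hJ.
    rewrite hJ /= Rmult_0_l; apply: Rmult_le_pos; [apply: Rmult_le_pos|]; lra.
  by move: hJ; rewrite /P; case: Rle_dec.
have hh : (INR h * tr <= dr * K)%R.
  rewrite -!mult_INR; apply: le_INR; apply/leP; rewrite /h.
  exact: leq_divM.
have Hst : (INR cnt * K ^ k <=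
    12 ^ k * nr ^ (d * h) * (INR h * nr) ^ (k - J) * (nr ^ d) ^ J)%R.
  have := le_INR _ _ (elimT leP st).
  rewrite !mult_INR (Aux2.INR_expn k k) (Aux2.INR_expn 12 k) (Aux2.INR_expn (expn n d) h).
  rewrite (Aux2.INR_expn (h * n) (k - J)) (Aux2.INR_expn (expn n d) J) (Aux2.INR_expn n d).
  rewrite (mult_INR h n) -pow_mult.
  have -> : INR 12 = 12%R by simpl; lra.
  by [].
have hDpos : (0 < Dr)%R by lra.
have A := RA.assemble d k h J cnt nr tr Dr th hd' hk1 hJk hnr htr1 hDpos (conj hth0 hth1) Hst hh hnk hJ.
have C := RA.core dr nr tr Dr th hdr hnr ht1 htr2 hD1 hD2 (conj hth0 hth1).
pose E := ((INR d - 1) * (1 - th * (1 - 1 / (2 * INR d ^ 2))))%R.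
have hE : ((dr - 1 - th * (dr - 1 - (dr - 1) / (2 * dr ^ 2))) = E)%R.
  rewrite /E /dr; field; lra.
rewrite hE in C.
apply: (Rle_trans _ (INR cnt)); first by apply: le_INR; apply/leP.
apply: (Rle_trans _ _ _ A).
have hpos : (0 < exp (RA.lnc dr) * Rpower (INR n) E)%R.
  by apply: Rmult_lt_0_compat; [apply: exp_pos | apply: RA.Rpower_pos].
rewrite -(Rpower_pow k _ hpos).
have -> : Rpower (exp (RA.lnc dr) * Rpower (INR n) E) (INR k) =
   exp (INR k * ln (exp (RA.lnc dr) * Rpower (INR n) E)) by [].
rewrite ln_mult; [|apply: exp_pos|apply: RA.Rpower_pos].
rewrite ln_exp ln_Rpower.
apply: RA.exp_le'.
apply: Rmult_le_compat_l; first by apply: pos_INR.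
exact: C.
Qed.
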